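(* Let $M\in\mathbb R^{n\times n}$ be sufficient and let the affine subspace $S=\{q+Q\theta:\theta\in\mathbb R^d\}$ lie in general position. Then for any two distinct complementary bases $B_1,B_2$, the relative interiors of the critical domains $S_{B_1}$ and $S_{B_2}$ are disjoint.
   Context: Let $M\in\mathbb R^{n\times n}$ and $A=[\,I\;\;-M\,]\in\mathbb R^{n\times 2n}$, columns indexed by $\{1,\dots,2n\}$; $A_{\cdot J}$ is the submatrix of columns indexed by $J$. Complementary index: $\bar i=i+n$ if $i\le n$, $\bar i=i-n$ if $i>n$. A set $J$ is complementary if $i\in J\Rightarrow\bar i\notin J$. A complementary basis is a complementary set $B$ with $|B|=n$ and $A_{\cdot B}$ invertible. Complementary cone: $\mathcal C(J)=\{A_{\cdot J}\lambda:\lambda\ge0\}$. Let $Q\in\mathbb R^{n\times d}$ have rank $d$, $q\in\mathbb R^n$, and $S=\{q+Q\theta:\theta\in\mathbb R^d\}$. The critical domain of a complementary basis $B$ is $S_B=\mathcal C(B)\cap S$. $S$ lies in general position if for every complementary basis $B$: $S\cap\mathcal C(B)\neq\emptyset$ implies $S\cap\operatorname{int}\mathcal C(B)\neq\emptyset$. $M$ is column sufficient if $[z_i(Mz)_i\le 0\ \forall i]\Rightarrow[z_i(Mz)_i=0\ \forall i]$; row sufficient if $M^T$ is column sufficient; sufficient if both. *)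

(* Defs.v *)
From HB Require Import structures.
From mathcomp Require Import all_boot all_order all_algebra.
Set Implicit Arguments. Unset Strict Implicit. Unset Printing Implicit Defensive.
Import Order.TTheory GRing.Theory Num.Theory.
Local Open Scope ring_scope.

Section LCP.
Variables (R : realFieldType) (n : nat).

(* A = [ I  -M ], columns indexed by 'I_(n + n): lshift = 1..n, rshift = n+1..2n *)
Definition Amat (M : 'M[R]_n) : 'M[R]_(n, n + n) := row_mx 1%:M (- M).

Definition cbar (i : 'I_(n + n)) : 'I_(n + n) :=
  match split i with
  | inl j => rshift n j
  | inr j => lshift n j
  end.

Definition complementary (J : {set 'I_(n + n)}) : Prop :=
  forall i, i \in J -> cbar i \notin J.

(* A_{.J}: the columns of A indexed by J (in increasing order) *)
Definition Acols (M : 'M[R]_n) (J : {set 'I_(n + n)}) : 'M[R]_(n, #|J|) :=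
  \matrix_(i < n, k < #|J|) Amat M i (enum_val k).

Definition compl_basis (M : 'M[R]_n) (B : {set 'I_(n + n)}) : Prop :=
  complementary B /\ #|B| = n /\ \rank (Acols M B) = n.

Definition ccone (M : 'M[R]_n) (J : {set 'I_(n + n)}) (z : 'cV[R]_n) : Prop :=
  exists lam : 'cV[R]_(#|J|), (forall k, 0 <= lam k 0) /\ z = Acols M J *m lam.

(* interior (w.r.t. the max norm, equivalent to any norm on R^n) *)
Definition interior (P : 'cV[R]_n -> Prop) (x : 'cV[R]_n) : Prop :=
  exists2 eps : R, 0 < eps &
    forall y : 'cV[R]_n, (forall i, `|y i 0 - x i 0| < eps) -> P y.

Definition aff_hull (P : 'cV[R]_n -> Prop) (y : 'cV[R]_n) : Prop :=
  exists (k : nat) (p : 'I_k -> 'cV[R]_n) (w : 'I_k -> R),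
    (forall j, P (p j)) /\ \sum_j w j = 1 /\ y = \sum_j w j *: p j.

Definition relint (P : 'cV[R]_n -> Prop) (x : 'cV[R]_n) : Prop :=
  P x /\ exists2 eps : R, 0 < eps &
    forall y : 'cV[R]_n, aff_hull P y -> (forall i, `|y i 0 - x i 0| < eps) -> P y.

Variable d : nat.

Definition affS (Q : 'M[R]_(n, d)) (q : 'cV[R]_n) (z : 'cV[R]_n) : Prop :=
  exists theta : 'cV[R]_d, z = q + Q *m theta.

Definition crit_domain (M : 'M[R]_n) (Q : 'M[R]_(n, d)) (q : 'cV[R]_n)
  (B : {set 'I_(n + n)}) (z : 'cV[R]_n) : Prop :=
  ccone M B z /\ affS Q q z.

Definition general_position (M : 'M[R]_n) (Q : 'M[R]_(n, d)) (q : 'cV[R]_n) : Prop :=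
  forall B, compl_basis M B ->
    (exists z, affS Q q z /\ ccone M B z) ->
    (exists z, affS Q q z /\ interior (ccone M B) z).

End LCP.

Definition column_sufficient (R : realFieldType) (n : nat) (M : 'M[R]_n) : Prop :=
  forall z : 'cV[R]_n,
    (forall i, z i 0 * (M *m z) i 0 <= 0) -> (forall i, z i 0 * (M *m z) i 0 = 0).

Definition row_sufficient (R : realFieldType) (n : nat) (M : 'M[R]_n) : Prop :=
  column_sufficient M^T.

Definition sufficient (R : realFieldType) (n : nat) (M : 'M[R]_n) : Prop :=
  column_sufficient M /\ row_sufficient M.

(* Main.v *)
Require Import Defs.
From HB Require Import structures.
From mathcomp Require Import all_boot all_order all_algebra.
Import Order.TTheory GRing.Theory Num.Theory.
Set Warnings "-all".
Local Open Scope ring_scope.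
Set Implicit Arguments. Unset Strict Implicit. Unset Printing Implicit Defensive.

Section Help.
Variables (R : realFieldType) (n : nat).

Lemma cbar_l (i : 'I_n) : cbar (lshift n i) = rshift n i.
Proof. by rewrite /cbar (unsplitK (inl _ i)). Qed.
Lemma cbar_r (i : 'I_n) : cbar (rshift n i) = lshift n i.
Proof. by rewrite /cbar (unsplitK (inr _ i)). Qed.

Definition pr (j : 'I_(n + n)) : 'I_n :=
  match split j with inl i => i | inr i => i end.

Lemma pr_eq j j' : pr j = pr j' -> j' = j \/ j' = cbar j.
Proof.
rewrite /pr; case: split_ordP => i -> ; case: split_ordP => i' -> /= ->.
- by left.
- by right; rewrite cbar_l.
- by right; rewrite cbar_r.
- by left.
Qed.

Lemma compl_full (B : {set 'I_(n + n)}) :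
  complementary B -> #|B| = n -> forall j, j \in B \/ cbar j \in B.
Proof.
move=> HB Hc j.
have inj : {in B &, injective pr}.
  move=> a b Ha Hb /pr_eq [//|Hba].
  by move: (HB a Ha); rewrite -Hba Hb.
have Hfull : pr @: B = setT.
  apply/eqP; rewrite eqEcard subsetT /= card_in_imset // cardsT card_ord Hc.
  by [].
have : pr j \in pr @: B by rewrite Hfull inE.
case/imsetP => j' Hj' /pr_eq [E|E]; rewrite -E; by [left|right].
Qed.


Variable (M : 'M[R]_n).

Definition ext (B : {set 'I_(n + n)}) (l : 'cV[R]_#|B|) : 'cV[R]_(n + n) :=
  \col_j \sum_(k : 'I_#|B| | enum_val k == j) l k 0.

Lemma ext_out (B : {set 'I_(n + n)}) (l : 'cV[R]_#|B|) j : j \notin B -> ext l j 0 = 0.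
Proof.
move=> Hj; rewrite mxE big_pred0 // => k.
by apply/eqP => E; move: Hj; rewrite -E enum_valP.
Qed.

Lemma ext_in (B : {set 'I_(n + n)}) (l : 'cV[R]_#|B|) k : ext l (enum_val k) 0 = l k 0.
Proof.
rewrite mxE (eq_bigl (fun k' => k' == k)) ?big_pred1_eq // => k'.
by rewrite (inj_eq (@enum_val_inj _ _)).
Qed.

Definition restr (B : {set 'I_(n + n)}) (u : 'cV[R]_(n + n)) : 'cV[R]_#|B| :=
  \col_k u (enum_val k) 0.

Lemma restr_mul (B : {set 'I_(n + n)}) (u : 'cV[R]_(n + n)) : (forall j, j \notin B -> u j 0 = 0) ->
  Amat M *m u = Acols M B *m restr B u.
Proof.
move=> Hu; apply/matrixP => i z; rewrite !mxE.
rewrite (bigID (fun j => j \in B)) /= [X in _ + X]big1 ?addr0; last first.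
  by move=> j Hj; rewrite (ord1 z) Hu ?mulr0.
rewrite (big_enum_val (fun j => Amat M i j * u j z)).
by apply: eq_bigr => k _; rewrite !mxE (ord1 z).
Qed.

Lemma restr_ext (B : {set 'I_(n + n)}) (l : 'cV[R]_#|B|) : restr B (ext l) = l.
Proof. by apply/matrixP => k z; rewrite mxE ext_in (ord1 z). Qed.

Lemma ext_supp (B : {set 'I_(n + n)}) (l : 'cV[R]_#|B|) j : j \notin B -> ext l j 0 = 0.
Proof. exact: ext_out. Qed.

Lemma ext_mul (B : {set 'I_(n + n)}) (l : 'cV[R]_#|B|) : Amat M *m ext l = Acols M B *m l.
Proof. by rewrite (restr_mul (@ext_supp B l)) restr_ext. Qed.

Lemma Acols_inj (B : {set 'I_(n + n)}) : compl_basis M B ->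
  forall l1 l2 : 'cV[R]_#|B|, Acols M B *m l1 = Acols M B *m l2 -> l1 = l2.
Proof.
case=> _ [Hc Hr] l1 l2 E.
have Hf : row_free (Acols M B)^T by rewrite /row_free mxrank_tr Hr Hc.
apply: trmx_inj; apply: (row_free_inj Hf).
by rewrite -!trmx_mul E.
Qed.

Lemma supp_inj (B : {set 'I_(n + n)}) (u1 u2 : 'cV[R]_(n + n)) : compl_basis M B ->
  (forall j, j \notin B -> u1 j 0 = 0) -> (forall j, j \notin B -> u2 j 0 = 0) ->
  Amat M *m u1 = Amat M *m u2 -> u1 = u2.
Proof.
move=> HB H1 H2; rewrite (restr_mul H1) (restr_mul H2) => /(Acols_inj HB) E.
apply/matrixP => j z; rewrite (ord1 z).
case: (boolP (j \in B)) => Hj; last by rewrite H1 ?H2.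
have := congr1 (fun v : 'cV[R]_#|B| => v (enum_rank_in Hj j) 0) E.
by rewrite !mxE enum_rankK_in.
Qed.

Lemma compl_prod (B : {set 'I_(n + n)}) (u : 'cV[R]_(n + n)) : complementary B ->
  (forall j, j \notin B -> u j 0 = 0) -> forall j, u j 0 * u (cbar j) 0 = 0.
Proof.
move=> HB Hu j; case: (boolP (j \in B)) => Hj; last by rewrite Hu ?mul0r.
by rewrite [u (cbar j) 0]Hu ?mulr0 // HB.
Qed.

Lemma Amat_split (u : 'cV[R]_(n + n)) :
  Amat M *m u = usubmx u - M *m dsubmx u.
Proof. by rewrite -{1}[u]vsubmxK /Amat mul_row_col mul1mx mulNmx. Qed.

Lemma core (B1 B2 : {set 'I_(n + n)}) (u1 u2 : 'cV[R]_(n + n)) :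
  column_sufficient M -> compl_basis M B1 -> compl_basis M B2 ->
  (forall j, j \in B1 -> 0 < u1 j 0) -> (forall j, j \notin B1 -> u1 j 0 = 0) ->
  (forall j, 0 <= u2 j 0) -> (forall j, j \notin B2 -> u2 j 0 = 0) ->
  Amat M *m u1 = Amat M *m u2 -> B1 = B2.
Proof.
move=> Hcs HB1 HB2 P1 S1 P2 S2 E.
have G1 : forall j, 0 <= u1 j 0.
  by move=> j; case: (boolP (j \in B1)) => Hj; [apply: ltW; apply: P1 | rewrite S1].
have C1 := compl_prod HB1.1 S1; have C2 := compl_prod HB2.1 S2.
have EM : M *m (dsubmx u1 - dsubmx u2) = usubmx u1 - usubmx u2.
  move: E; rewrite !Amat_split mulmxBr => /eqP; rewrite subr_eq => /eqP ->.
  by rewrite addrAC [_ - _ - _]addrAC subrr add0r addrC.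

pose zz := dsubmx u1 - dsubmx u2.
have key : forall i, zz i 0 * (M *m zz) i 0 =
    - (u1 (rshift n i) 0 * u2 (lshift n i) 0 + u2 (rshift n i) 0 * u1 (lshift n i) 0).
  move=> i; rewrite EM !mxE mulrBl !mulrBr.
  have h1 := C1 (lshift n i); rewrite cbar_l in h1.
  have h2 := C2 (lshift n i); rewrite cbar_l in h2.
  rewrite [u1 (rshift n i) 0 * u1 _ _]mulrC h1 [u2 (rshift n i) 0 * u2 _ _]mulrC h2.
  by rewrite sub0r subr0 opprD [u2 _ _ * _]mulrC.
have Z : forall i, zz i 0 * (M *m zz) i 0 = 0.
  apply: Hcs => i; rewrite key oppr_le0.
  by apply: addr_ge0; apply: mulr_ge0.
have X : forall j, u1 (cbar j) 0 * u2 j 0 = 0.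
  move=> j; case: (split_ordP j) => i ->.
  - rewrite cbar_l; move: (Z i); rewrite key => /eqP; rewrite oppr_eq0.
    by rewrite paddr_eq0 ?mulr_ge0 // => /andP [/eqP H _].
  - rewrite cbar_r; move: (Z i); rewrite key => /eqP; rewrite oppr_eq0.
    by rewrite paddr_eq0 ?mulr_ge0 // => /andP [_ /eqP H]; rewrite mulrC.
have S21 : forall j, j \notin B1 -> u2 j 0 = 0.
  move=> j Hj.
  have Hc : cbar j \in B1.
    by case: (compl_full HB1.1 HB1.2.1 j) => // Hj'; rewrite Hj' in Hj.
  move: (X j) => /eqP; rewrite mulf_eq0 => /orP [/eqP H|/eqP //].
  by move: (P1 _ Hc); rewrite H ltxx.
have U := supp_inj HB1 S1 S21 E.
apply/eqP; rewrite eqEcard HB1.2.1 HB2.2.1 leqnn andbT.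
apply/subsetP => j Hj; apply/negPn/negP => Hn.
by move: (P1 _ Hj); rewrite U S2 // ltxx.
Qed.

Lemma small (v : 'cV[R]_n) (c : R) : 0 < c ->
  exists2 s, 0 < s & s <= 1 /\ forall i, s * `|v i 0| < c.
Proof.
move=> c0; pose S := \sum_i `|v i 0|; pose D := 1 + c + S.
have S0 : 0 <= S by apply: sumr_ge0 => i _.
have D0 : 0 < D by rewrite /D -addrA ltr_wpDr // addr_ge0 // ltW.
exists (c / D); first by rewrite divr_gt0.
split.
  rewrite ler_pdivrMr // mul1r /D; apply: ler_wpDr => //; exact: ler_wpDl.
move=> i; have Hi : `|v i 0| <= S.
  by rewrite /S (bigD1 i) //= lerDl sumr_ge0.
apply: (le_lt_trans (y := c / D * S)).
  by rewrite ler_wpM2l // ltW // divr_gt0.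
rewrite -[X in _ < X](divfK (lt0r_neq0 D0)) ltr_pM2l ?divr_gt0 //.
by rewrite /D; apply: ltr_pwDl; rewrite ?addr_gt0.
Qed.

Lemma interior_pos (B : {set 'I_(n + n)}) (p : 'cV[R]_n) : compl_basis M B ->
  interior (ccone M B) p ->
  exists l : 'cV[R]_#|B|, (forall k, 0 < l k 0) /\ p = Acols M B *m l.
Proof.
move=> HB [eps e0 Hin].
have [l [l0 El]] : ccone M B p by apply: Hin => i; rewrite subrr normr0.
exists l; split=> // k; rewrite lt0r l0 andbT; apply/negP => /eqP lk.
pose a := Acols M B *m delta_mx k (0 : 'I_1).
have Ea : a = Acols M B *m delta_mx k 0 by [].
clearbody a.
have [s s0 [_ Hs]] := small a e0.
have [mu [mu0 Emu]] : ccone M B (p - s *: a).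
  by apply: Hin => i; rewrite !mxE addrAC subrr add0r normrN normrM gtr0_norm.
have : mu = l - s *: delta_mx k 0.
  apply: (Acols_inj HB); rewrite mulmxBr -scalemxAr -Ea -El; exact: esym Emu.

move/(congr1 (fun m : 'cV[R]_#|B| => m k 0)); rewrite !mxE lk !eqxx mulr1 sub0r.
by move=> E; move: (mu0 k); rewrite E oppr_ge0 leNgt s0.
Qed.
End Help.

Lemma ext_pos (R : realFieldType) (n : nat) (B : {set 'I_(n + n)}) (l : 'cV[R]_#|B|) :
  (forall k, 0 < l k 0) -> forall j, j \in B -> 0 < ext l j 0.
Proof. by move=> H j Hj; rewrite -(enum_rankK_in Hj Hj) ext_in. Qed.

Lemma ext_ge0 (R : realFieldType) (n : nat) (B : {set 'I_(n + n)}) (l : 'cV[R]_#|B|) :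
  (forall k, 0 <= l k 0) -> forall j, 0 <= ext l j 0.
Proof. by move=> H j; rewrite mxE sumr_ge0. Qed.

Unset Implicit Arguments.
Theorem mainTheorem5 (R : realFieldType) (n d : nat)
  (M : 'M[R]_n) (Q : 'M[R]_(n, d)) (q : 'cV[R]_n) :
  sufficient M ->
  \rank Q = d ->
  general_position M Q q ->
  forall B1 B2 : {set 'I_(n + n)},
    compl_basis M B1 -> compl_basis M B2 -> B1 != B2 ->
    forall z : 'cV[R]_n,
      ~ (relint (crit_domain M Q q B1) z /\ relint (crit_domain M Q q B2) z).
Proof.
move=> [Hcs _] _ HGP B1 B2 HB1 HB2 Hne z [[[Hc1 HS1] _] [[Hc2 HS2] [e2 e20 Hrel2]]].
have [p1 [[th1 Ep1] Hint1]] := HGP B1 HB1 (ex_intro _ z (conj HS1 Hc1)).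
have [p2 [[th2 Ep2] [e3 e30 Hin3]]] := HGP B2 HB2 (ex_intro _ z (conj HS2 Hc2)).
have [l1 [l1p El1]] := interior_pos HB1 Hint1.
have Hc1' := Hc1; case: Hc1' => l0 [l00 El0].
have HS1' := HS1; case: HS1' => th0 Ez.
pose v := p1 - z.
have Ev : v = Q *m (th1 - th0).
  by rewrite /v mulmxBr Ep1 Ez opprD addrACA subrr add0r.
have Ev0 : v = p1 - z by [].
clearbody v.
have [s s0 [_ Hs]] := small v e30.
have [t t0 [t1 Ht]] := small v e20.
pose x := z + t *: v.
have Hx : crit_domain M Q q B2 x.
  apply: (Hrel2 x); last first.
    by move=> i; rewrite /x !mxE addrAC subrr add0r normrM (gtr0_norm t0).
  exists 3, (fun j : 'I_3 => nth 0 [:: z; p2 + s *: v; p2] j),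
            (fun j : 'I_3 => nth 0 [:: 1; t / s; - (t / s)] j).
  split; [|split].
  - case=> [[|[|[|//]]] ?] /=.
    + by split.
    + split.
        by apply: Hin3 => i; rewrite !mxE addrAC subrr add0r normrM (gtr0_norm s0).
      exists (th2 + s *: (th1 - th0)).
      by rewrite mulmxDr -scalemxAr -Ev Ep2 addrA.
    + split; last by exists th2.
      by apply: Hin3 => i; rewrite subrr normr0.
  - by rewrite !big_ord_recl big_ord0 /= addr0 subrr addr0.
  - rewrite !big_ord_recl big_ord0 /= addr0 scale1r scalerDr scalerA divfK ?lt0r_neq0 //.
    by rewrite scaleNr addrAC subrr add0r.
case: Hx => [[mu [mu0 Emu]] _].
pose l := (1 - t) *: l0 + t *: l1.
have Hl : forall k, 0 < l k 0.
  move=> k; rewrite /l !mxE; apply: ltr_wpDl.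
    by apply: mulr_ge0; rewrite ?subr_ge0.
  by rewrite mulr_gt0.
have EA : Amat M *m ext l = Amat M *m ext mu.
  rewrite !ext_mul -Emu /l mulmxDr -!scalemxAr -El0 -El1 /x Ev0.
  by rewrite scalerBl scale1r scalerBr addrA addrAC.
move/eqP: Hne; apply.
apply: (core Hcs HB1 HB2 (ext_pos Hl) (@ext_out _ _ _ l) (ext_ge0 mu0) (@ext_out _ _ _ mu) EA).
Qed.
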